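(* Assume $\Theta_0$ and $\Theta_1$ are nonempty. For $\theta_0\in\Theta_0$, $\theta_1\in\Theta_1$ and $\pi_0\in[0,1]$ let $Q_{\pi_0}=\pi_0\,\delta_{\theta_0}+(1-\pi_0)\,\delta_{\theta_1}$. A menu $\mathcal{F}\subseteq\bar{\mathcal{F}}$ satisfies $\liminf_{\pi_0\to 1^-} U(Q_{\pi_0},\mathcal{F})\ge 0$ for all $\theta_0\in\Theta_0$ and all $\theta_1\in\Theta_1$ if and only if $\mathcal{F}$ is incentive-aligned.
   Context: Let $\Theta$ be a set of types partitioned as $\Theta=\Theta_0\sqcup\Theta_1$ (null and nonnull types), and let $(P_\theta)_{\theta\in\Theta}$ be probability distributions on a measurable space $\mathcal{Z}$; $\mathbb{E}_\theta$ denotes expectation with $Z\sim P_\theta$. Fix a cost $C>0$. Fix an ambient class $\bar{\mathcal{F}}$ of measurable functions $f:\mathcal{Z}\to[0,\infty)$ (''license functions'') with $\mathbb{E}_\theta[f(Z)]<\infty$ for all $\theta$. A menu is a subset $\mathcal{F}\subseteq\bar{\mathcal{F}}$; it is assumed (attainment assumption) that for every $\theta$, $\sup_{f\in\mathcal{F}}\mathbb{E}_\theta[f(Z)]$ is attained when $\mathcal{F}\ne\emptyset$. Agent behavior: an agent of type $\theta$ offered $\mathcal{F}$ opts in ($I=1$) iff $\mathcal{F}\neq\emptyset$ and $\max_{f\in\mathcal{F}}\mathbb{E}_\theta[f(Z)]>C$, in which case it selects some maximizer $f^{\mathrm{br}}(\cdot;\theta,\mathcal{F})\in\arg\max_{f\in\mathcal{F}}\mathbb{E}_\theta[f(Z)]$;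 otherwise it opts out ($I=0$). The realized license is $L=f^{\mathrm{br}}(Z;\theta,\mathcal{F})$ with $Z\sim P_\theta$. The principal's utility is a function $u:\Theta\times[0,\infty)\to\mathbb{R}$ such that: for $\theta\in\Theta_1$, $u(\theta,\cdot)$ is nondecreasing and $0\le u(\theta,L)\le a_1$ for some constant $a_1<\infty$; for $\theta\in\Theta_0$, $u(\theta,\cdot)$ is nonincreasing, $u(\theta,0)\le 0$ and $u(\theta,L)<0$ for all $L>0$. For a probability distribution $Q$ on $\Theta$, the principal's expected utility is $U(Q,\mathcal{F})=\mathbb{E}_{\theta\sim Q}\big[\mathbb{E}_{Z\sim P_\theta}[u(\theta,L)\cdot I\mid\theta]\big]$. A menu $\mathcal{F}$ is incentive-aligned if $\mathbb{E}_\theta[f(Z)]\le C$ for all $\theta\in\Theta_0$ and all $f\in\mathcal{F}$. *)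

(* Defs.v *)
From HB Require Import structures.
From mathcomp Require Import all_boot all_order all_algebra.
From mathcomp Require Import all_classical all_reals all_analysis.
Set Implicit Arguments. Unset Strict Implicit. Unset Printing Implicit Defensive.
Import Order.TTheory GRing.Theory Num.Theory.
Local Open Scope classical_set_scope.
Local Open Scope ring_scope.

Definition expect {d} {Z : measurableType d} {R : realType}
  (P : probability Z R) (f : Z -> R) : \bar R :=
  (\int[P]_z (f z)%:E)%E.

(* Opt-in decision of an agent of type theta offered menu F, given its
   selected best response br theta : opt in iff F nonempty and
   max_{f in F} E_theta[f] (= E_theta[br theta]) > C. *)
Definition opt_in {d} {Z : measurableType d} {R : realType} {Theta : Type}
  (P : Theta -> probability Z R) (C : R) (F : set (Z -> R))
  (br : Theta -> Z -> R) (th : Theta) : Prop :=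
  F !=set0 /\ (C%:E < expect (P th) (br th))%E.

Definition cond_util {d} {Z : measurableType d} {R : realType} {Theta : Type}
  (P : Theta -> probability Z R) (C : R) (F : set (Z -> R))
  (br : Theta -> Z -> R) (u : Theta -> R -> R) (th : Theta) : \bar R :=
  (\int[P th]_z (u th (br th z) * (asbool (opt_in P C F br th))%:R)%:E)%E.

Definition U_two {d} {Z : measurableType d} {R : realType} {Theta : Type}
  (P : Theta -> probability Z R) (C : R) (F : set (Z -> R))
  (br : Theta -> Z -> R) (u : Theta -> R -> R) (th0 th1 : Theta)
  (pi0 : R) : \bar R :=
  (pi0%:E * cond_util P C F br u th0 + (1 - pi0)%:E * cond_util P C F br u th1)%E.

(* liminf_{x -> a^-} g x, where g is only considered on [0,1]
   (the domain of pi0):  sup_{delta > 0} inf_{x in [0,1], a - delta < x < a} g x *)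
Definition liminf_left01 {R : realType} (g : R -> \bar R) (a : R) : \bar R :=
  ereal_sup [set ereal_inf (g @` [set x | 0 <= x <= 1 /\ a - e < x < a])
            | e in [set e : R | 0 < e]].

Definition incentive_aligned {d} {Z : measurableType d} {R : realType}
  {Theta : Type} (P : Theta -> probability Z R) (null : Theta -> Prop)
  (C : R) (F : set (Z -> R)) : Prop :=
  forall th f, null th -> F f -> (expect (P th) f <= C%:E)%E.

(* Main.v *)
Require Import Defs.
From HB Require Import structures.
From mathcomp Require Import all_boot all_order all_algebra.
From mathcomp Require Import measurable_realfun.
From mathcomp Require Import ring lra.
From mathcomp Require Import all_classical all_reals all_analysis.
Import Order.TTheory GRing.Theory Num.Theory.
Local Open Scope classical_set_scope.
Local Open Scope ring_scope.

Lemma mono_comp_meas (R : realType) d (Z : measurableType d) (v : R -> R) (g : Z -> R) :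
  measurable_fun setT g -> (forall z, 0 <= g z) ->
  (forall x y, 0 <= x -> x <= y -> v x <= v y) ->
  measurable_fun setT (fun z => v (g z)).
Proof.
move=> mg g0 hv.
have -> : (fun z => v (g z)) = (fun x => v (Num.max 0 x)) \o g.
  by apply/funext => z /=; rewrite max_r.
apply: measurableT_comp => //.
apply: nondecreasing_measurable => // x y xy.
apply: hv; first by rewrite le_max lexx.
by rewrite ge_max le_max lexx /= (le_trans xy) ?le_max ?lexx ?orbT.
Qed.

Lemma anti_comp_meas (R : realType) d (Z : measurableType d) (v : R -> R) (g : Z -> R) :
  measurable_fun setT g -> (forall z, 0 <= g z) ->
  (forall x y, 0 <= x -> x <= y -> v y <= v x) ->
  measurable_fun setT (fun z => v (g z)).
Proof.
move=> mg g0 hv.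
have -> : (fun z => v (g z)) = (fun z => - (- v (g z))) by apply/funext => z; rewrite opprK.
apply: measurable_funN.
apply: (@mono_comp_meas R d Z (fun x => - v x)) => // x y x0 xy.
by rewrite lerN2 hv.
Qed.

Lemma cond_util_zero (R : realType) d (Z : measurableType d) (Theta : Type)
  (P : Theta -> probability Z R) (C : R) (F : set (Z -> R))
  (br : Theta -> Z -> R) (u : Theta -> R -> R) th :
  ~ opt_in P C F br th -> cond_util P C F br u th = 0%E.
Proof.
move=> no; rewrite /cond_util (asboolF no) /=.
by apply: integral0_eq => z _; rewrite mulr0.
Qed.

Lemma liminf_ge0 (R : realType) (g : R -> \bar R) :
  (forall x, 0 <= x <= 1 -> (0 <= g x)%E) -> (0 <= liminf_left01 g 1)%E.
Proof.
move=> h; rewrite /liminf_left01.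
apply: le_trans (ereal_sup_ubound _); last first.
  by exists 1 => //=; rewrite ltr01.
apply: le_ereal_inf_tmp => _ [x [hx _] <-]; exact: h.
Qed.
Theorem proposition2p3 (R : realType) (d : measure_display) (Z : measurableType d)
  (Theta : Type) (null : Theta -> Prop) (P : Theta -> probability Z R)
  (C : R) (hC : 0 < C)
  (Fbar : set (Z -> R))
  (hFbar : forall f, Fbar f ->
     [/\ measurable_fun setT f, (forall z, 0 <= f z)
       & forall th, (P th).-integrable setT (fun z => (f z)%:E)])
  (u : Theta -> R -> R) (a1 : R)
  (hu1 : forall th, ~ null th ->
     (forall x y, 0 <= x -> x <= y -> u th x <= u th y) /\
     (forall L, 0 <= L -> 0 <= u th L <= a1))
  (hu0 : forall th, null th ->
     [/\ (forall x y, 0 <= x -> x <= y -> u th y <= u th x),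
         u th 0 <= 0
       & forall L, 0 < L -> u th L < 0])
  (hTh0 : exists th, null th) (hTh1 : exists th, ~ null th)
  (F : set (Z -> R)) (hF : F `<=` Fbar)
  (br : Theta -> Z -> R)
  (hbr : F !=set0 -> forall th,
     F (br th) /\ forall f, F f -> (expect (P th) f <= expect (P th) (br th))%E) :
  (forall th0 th1, null th0 -> ~ null th1 ->
     (0 <= liminf_left01 (U_two P C F br u th0 th1) 1)%E)
  <-> incentive_aligned P null C F.
Proof.
split; last first.
- move=> IA th0 th1 n0 n1.
  apply: liminf_ge0 => x /andP[x0 x1].
  rewrite /U_two (@cond_util_zero _ _ _ _ _ _ _ _ _ th0); last first.
    move=> [Fn]; have [Fb _] := hbr Fn th0.
    by rewrite ltNge (IA _ _ n0 Fb).
  rewrite mule0 add0e; apply: mule_ge0; first by rewrite lee_fin subr_ge0.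
  apply: integral_ge0 => z _; rewrite lee_fin.
  case: (asboolP (opt_in P C F br th1)) => [[Fn _]|_]; last by rewrite mulr0.
  rewrite mulr1; have [Fb _] := hbr Fn th1; have [_ b0 _] := hFbar _ (hF _ Fb).
  exact: (andP ((hu1 _ n1).2 _ (b0 z))).1.
- move=> H th f n0 Ff.
  rewrite leNgt; apply/negP => Cf.
  have Fn : F !=set0 by exists f.
  have [th1 n1] := hTh1.
  have [Fb0 bmax0] := hbr Fn th.
  have [mb0 b00 ib0] := hFbar _ (hF _ Fb0).
  have Cb : (C%:E < expect (P th) (br th))%E := lt_le_trans Cf (bmax0 _ Ff).
  have [hu0m hu00 hu0n] := hu0 _ n0.
  set A := [set z | C <= br th z].
  have mA : measurable A.
    have := mb0 measurableT _ (measurable_itv `[C, +oo[).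
    rewrite setTI; congr measurable; apply/seteqP; split => z /=;
      by rewrite in_itv /= andbT.
  have PA0 : (0 < P th A)%E.
    rewrite lt0e measure_ge0 andbT; apply/negP => /eqP PA0.
    move: Cb; apply/negP; rewrite -leNgt /expect.
    apply: (@le_trans _ _ (\int[P th]_z (cst C%:E) z)%E); last first.
      rewrite integral_cst //.
      apply: (@le_trans _ _ (C%:E * 1)%E); last by rewrite mule1.
      apply: lee_wpmul2l; first by rewrite lee_fin ltW.
      exact: probability_le1.
    apply: ae_ge0_le_integral => //.
    - by move=> z _; rewrite lee_fin.
    - exact/measurable_EFinP.
    - by move=> z _; rewrite lee_fin ltW.
    - exists A; split => // z /= nz; rewrite /A /=; apply: ltW; rewrite ltNge.
      by apply/negP => hz; apply: nz => _; rewrite lee_fin.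

  set c := - u th C.
  have c0 : 0 < c by rewrite oppr_gt0 hu0n.
  have PAfin : P th A \is a fin_num.
    rewrite ge0_fin_numE ?measure_ge0 //.
    exact: (le_lt_trans (probability_le1 _ mA)) (ltey _).
  have pA0 : 0 < fine (P th A) by rewrite -lte_fin fineK.
  have k0 : 0 < c * fine (P th A) by rewrite mulr_gt0.
  move: k0; set k := c * fine (P th A) => k0.
  have ge0g : forall z, 0 <= - u th (br th z).
    move=> z; rewrite oppr_ge0; have := b00 z; rewrite le_eqVlt => /orP[/eqP <-|bz] //.
    exact: ltW (hu0n _ bz).
  have mg := @anti_comp_meas R d Z (u th) (br th) mb0 b00 hu0m.
  have cu0 : (cond_util P C F br u th <= (- k)%:E)%E.
    have opt : opt_in P C F br th by split.
    rewrite /cond_util (asboolT opt) /=.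
    under eq_integral do rewrite mulr1 -[u _ _]opprK EFinN.
    rewrite integral_ge0N; last by move=> z _; rewrite lee_fin.
    rewrite EFinN leeN2 /k.
    have -> : ((c * fine (P th A))%:E = c%:E * P th A)%E by rewrite -[in RHS](fineK PAfin).
    apply: (@le_trans _ _ (\int[P th]_(z in A) (cst c%:E) z)%E).
      by rewrite integral_cst.
    apply: (@le_trans _ _ (\int[P th]_(z in A) (- u th (br th z))%:E)%E).
      apply: ge0_le_integral => //.
      - by move=> z _; rewrite lee_fin ltW.
      - apply/measurable_EFinP; apply: measurable_funN.
        exact: (measurable_funS measurableT (@subsetT _ A) mg).
      - move=> z Az; rewrite lee_fin lerN2; apply: hu0m => //; exact: ltW.
    apply: ge0_subset_integral => //.
    - exact/measurable_EFinP/measurable_funN.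
    - by move=> z _; rewrite lee_fin.
  have [hu1m hu1b] := hu1 _ n1.
  have a10 : 0 <= a1 by have /andP[h1 h2] := hu1b 0 (lexx 0); exact: le_trans h2.
  have cu1 : (cond_util P C F br u th1 <= a1%:E)%E.
    case: (pselect (opt_in P C F br th1)) => o1; last by rewrite cond_util_zero // lee_fin.
    rewrite /cond_util (asboolT o1) /=.
    have [Fb1 _] := hbr Fn th1; have [mb1 b10 _] := hFbar _ (hF _ Fb1).
    under eq_integral do rewrite mulr1.
    apply: (@le_trans _ _ (\int[P th1]_z (cst a1%:E) z)%E).
      apply: ge0_le_integral => //.
      - by move=> z _; rewrite lee_fin (andP (hu1b _ (b10 z))).1.
      - exact/measurable_EFinP/(@mono_comp_meas R d Z (u th1) (br th1) mb1 b10 hu1m).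
      - by move=> z _; rewrite lee_fin (andP (hu1b _ (b10 z))).2.
    rewrite integral_cst //.
    apply: (@le_trans _ _ (a1%:E * 1)%E); last by rewrite mule1.
    apply: lee_wpmul2l; first by rewrite lee_fin.
    exact: probability_le1.
  have Ub : forall x, 0 <= x <= 1 ->
      (U_two P C F br u th th1 x <= (x * (-k) + (1-x) * a1)%:E)%E.
    move=> x /andP[x0 x1]; rewrite /U_two [leRHS]EFinD !EFinM.
    by apply: leeD; apply: lee_wpmul2l => //; rewrite lee_fin // subr_ge0.
  have := H th th1 n0 n1; apply/negP; rewrite -ltNge.
  have k20 : 0 < k / 2 by rewrite divr_gt0.
  apply: (@le_lt_trans _ _ (- (k/2))%:E); last by rewrite lte_fin ltrNl oppr0.
  apply: ge_ereal_sup => _ [e /= e0 <-].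
  have ak0 : 0 < a1 + k by lra.
  pose t := k / (2 * (a1 + k)).
  have t0 : 0 < t by rewrite divr_gt0 // mulr_gt0.
  have tak : t * (a1 + k) = k / 2.
    rewrite /t; field; lra.
  pose m := Num.min e t.
  have me : m <= e by rewrite ge_min lexx.
  have mt : m <= t by rewrite ge_min lexx orbT.
  have m0 : 0 < m by rewrite lt_min e0 t0.
  have tle : t <= 1/2 by nra.
  apply: (@le_trans _ _ (U_two P C F br u th th1 (1 - m/2))).
    apply: ereal_inf_lbound; exists (1 - m/2) => //; split.
      apply/andP; split; lra.
    apply/andP; split; lra.
  apply: le_trans (Ub _ _) _; first by apply/andP; split; lra.
  rewrite lee_fin.
  have : m/2 * (a1 + k) <= t/2 * (a1 + k) by apply: ler_wpM2r; lra.
  lra.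
Qed.
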